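(* Let $\tau$ be a vocabulary. Every $\Pi^1_1\text{-}\mathrm{KROM}^r(\tau)$ formula $\Phi$ is equivalent (on all finite $\tau$-structures) to a first-order $\tau$-formula of the form $\forall \bar{x}\,\varphi$, where $\varphi$ is a quantifier-free formula in conjunctive normal form (whose literals are atomic or negated atomic $\tau$-formulas, equality included).
   Context: All structures are finite; every vocabulary contains equality. For a vocabulary $\tau$, an SO-KROM$^r(\tau)$ formula is a second-order formula of the form $Q_1R_1\cdots Q_mR_m\forall\bar{x}(C_1\wedge\cdots\wedge C_n)$, where each $Q_i\in\{\forall,\exists\}$, $R_1,\dots,R_m$ are second-order relation variables, and each clause $C_j$ is a disjunction $\beta_1\vee\cdots\vee\beta_q\vee H_1\vee H_2$ in which each $\beta_s$ is an atomic or negated atomic $\tau$-formula $P\bar{y}$ or $\neg P\bar{y}$ ($P\in\tau$, including equality), and each $H_t$ is one of $R_i\bar{z}$, $\neg R_i\bar{z}$, $\exists z_1\cdots\exists z_{r}R_i z_1\dots z_r$ (with $r$ the arity of $R_i$, $1\le i\le m$), or $\bot$. (If the third option is disallowed, the logic is SO-KROM, second-order Krom logic.) $\Sigma^1_k\text{-}\mathrm{KROM}^r$ (resp. $\Pi^1_k\text{-}\mathrm{KROM}^r$) is the set of SO-KROM$^r$ formulas whose second-order quantifier prefix starts with an existential (resp. universal) quantifier and has exactly $k-1$ alternations between blocks of existential and universal quantifiers; similarly $\Sigma^1_k$-KROM, $\Pi^1_k$-KROM for SO-KROM. *)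

(* Defs.v *)
From Stdlib Require List.
From mathcomp Require Import all_boot.
Set Implicit Arguments. Unset Strict Implicit. Unset Printing Implicit Defensive.

(* A relational vocabulary: relation symbols with arities (equality is built in). *)
Record vocab := Vocab { sym : Type; ar : sym -> nat }.

(* First-order variables are natural numbers. *)

Inductive tlit (V : vocab) : Type :=
| TPos (P : sym V) (xs : (ar P).-tuple nat)
| TNeg (P : sym V) (xs : (ar P).-tuple nat)
| TEq  (x y : nat)
| TNeq (x y : nat).

(* The H-literals: R_i z, ~ R_i z, exists z1..zr R_i z1..zr, bottom.
   Second-order variables R_i are indexed by their position i (from 0)
   in the quantifier prefix. *)
Inductive hlit : Type :=
| HPos (i : nat) (zs : seq nat)
| HNeg (i : nat) (zs : seq nat)
| HEx  (i : nat)
| HBot.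

(* clause  beta_1 \/ ... \/ beta_q \/ H1 \/ H2 *)
Definition clause (V : vocab) := (seq (tlit V) * hlit * hlit)%type.

(* SO-KROM^r formula Q1 R1 ... Qm Rm forall xbar (C1 /\ ... /\ Cn).
   prefix : list of (quantifier, arity), quantifier true = forall, false = exists.
   The first-order block forall xbar universally closes all variables
   occurring in the clauses. *)
Record sokrom (V : vocab) := SOKrom {
  prefix  : seq (bool * nat);
  clauses : seq (clause V) }.

Definition hlit_wf (pref : seq (bool * nat)) (h : hlit) : Prop :=
  match h with
  | HPos i zs | HNeg i zs => i < size pref /\ size zs = (nth (true, 0) pref i).2
  | HEx i => i < size pref
  | HBot => True
  end.

Definition sokrom_wf (V : vocab) (F : sokrom V) : Prop :=
  forall c, List.In c (clauses F) ->
    hlit_wf (prefix F) c.1.2 /\ hlit_wf (prefix F) c.2.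

(* Pi^1_1: prefix starts with a universal quantifier and has no alternation,
   i.e. it is nonempty and consists of universal quantifiers only. *)
Definition is_Pi11 (V : vocab) (F : sokrom V) : Prop :=
  prefix F <> [::] /\ all fst (prefix F).

Definition interp (V : vocab) (A : Type) := forall P : sym V, (ar P).-tuple A -> bool.

Definition tlit_sem (V : vocab) (A : Type) (I : interp V A) (s : nat -> A)
    (l : tlit V) : Prop :=
  match l with
  | TPos P xs => I P (map_tuple s xs)
  | TNeg P xs => ~~ I P (map_tuple s xs)
  | TEq x y => s x = s y
  | TNeq x y => s x <> s y
  end.

Definition Rel (A : Type) := {r : nat & r.-tuple A -> bool}.
Definition rel0 (A : Type) : Rel A := existT _ 0 (fun _ => false).

Definition hlit_sem (A : Type) (env : seq (Rel A)) (s : nat -> A) (h : hlit) : Prop :=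
  match h with
  | HPos i zs => exists t : (projT1 (nth (rel0 A) env i)).-tuple A,
                   val t = map s zs /\ projT2 (nth (rel0 A) env i) t
  | HNeg i zs => exists t : (projT1 (nth (rel0 A) env i)).-tuple A,
                   val t = map s zs /\ ~~ projT2 (nth (rel0 A) env i) t
  | HEx i => exists t : (projT1 (nth (rel0 A) env i)).-tuple A,
                   projT2 (nth (rel0 A) env i) t
  | HBot => False
  end.

Definition clause_sem (V : vocab) (A : Type) (I : interp V A) (env : seq (Rel A))
    (s : nat -> A) (c : clause V) : Prop :=
  (exists l, List.In l c.1.1 /\ tlit_sem I s l) \/
  hlit_sem env s c.1.2 \/ hlit_sem env s c.2.

Definition matrix_sem (V : vocab) (A : Type) (I : interp V A) (cs : seq (clause V))
    (env : seq (Rel A)) : Prop :=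
  forall s : nat -> A, forall c, List.In c cs -> clause_sem I env s c.

Fixpoint prefix_sem (V : vocab) (A : Type) (I : interp V A) (cs : seq (clause V))
    (pref : seq (bool * nat)) (env : seq (Rel A)) : Prop :=
  match pref with
  | [::] => matrix_sem I cs env
  | (q, r) :: p =>
      if q then forall R : r.-tuple A -> bool,
                  prefix_sem I cs p (rcons env (existT _ r R))
      else exists R : r.-tuple A -> bool,
                  prefix_sem I cs p (rcons env (existT _ r R))
  end.

Definition sokrom_sat (V : vocab) (A : Type) (I : interp V A) (F : sokrom V) : Prop :=
  prefix_sem I (clauses F) (prefix F) [::].

(* First-order formula  forall xbar phi  with phi a CNF of tau-literals
   (the universal block closes all variables of phi). *)
Definition cnf (V : vocab) := seq (seq (tlit V)).

Definition cnf_sat (V : vocab) (A : Type) (I : interp V A) (phi : cnf V) : Prop :=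
  forall s : nat -> A, forall C, List.In C phi -> exists l, List.In l C /\ tlit_sem I s l.

(* Main.v *)
Require Import Defs.
From mathcomp Require Import all_boot.
From Stdlib Require Import Classical.
Set Implicit Arguments. Unset Strict Implicit.


Fixpoint shaped (A : Type) (p : seq (bool * nat)) (env : seq (Rel A)) : Prop :=
  match p, env with
  | [::], [::] => True
  | (q, r) :: p', e :: es => projT1 e = r /\ shaped p' es
  | _, _ => False
  end.

Lemma shaped_nth (A : Type) p env i : shaped p env -> i < size p ->
  projT1 (nth (rel0 A) env i) = (nth (true, 0) p i).2.
Proof.
elim: p env i => [|[q r] p IH] [|e es] [|i] //=; first by case.
by case=> _ H /IH; apply.
Qed.

Fixpoint mk (A : Type) (g : nat -> seq A -> bool) (p : seq (bool * nat)) (k : nat) : seq (Rel A) :=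
  match p with
  | [::] => [::]
  | (q, r) :: p' => existT _ r (fun t : r.-tuple A => g k (val t)) :: mk g p' k.+1
  end.

Lemma shaped_mk (A : Type) (g : nat -> seq A -> bool) p k : shaped p (mk g p k).
Proof. by elim: p k => [|[q r] p IH] k //=; split. Qed.

Lemma nth_mk (A : Type) (g : nat -> seq A -> bool) p k i : i < size p ->
  nth (rel0 A) (mk g p k) i = existT _ (nth (true, 0) p i).2 (fun t => g (k + i) (val t)).
Proof.
elim: p k i => [|[q r] p IH] k [|i] //=; first by rewrite addn0.
by move=> Hi; rewrite IH // addSnnS.
Qed.

Lemma prefix_all (V : vocab) (A : Type) (I : interp V A) cs p env0 :
  all fst p ->
  (prefix_sem I cs p env0 <-> forall env, shaped p env -> matrix_sem I cs (env0 ++ env)).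
Proof.
elim: p env0 => [|[q r] p IH] env0 /=.
  split; first by move=> Hm [|] //; rewrite cats0.
  by move=> Hm; move: (Hm [::] Logic.I); rewrite cats0.
move=> /andP [/= Hq Hp]; rewrite Hq; split.
  move=> H [|[r' R] es] //= [/= Er Hs]; subst r'.
  by have /(IH _ Hp) := H R; move/(_ es Hs); rewrite cat_rcons.
move=> H R; apply/(IH _ Hp) => es Hs; rewrite cat_rcons; apply: H => /=; by split.
Qed.


Definition valid2 (h1 h2 : hlit) : bool :=
  match h1, h2 with
  | HNeg i _, HEx j => i == j
  | HEx j, HNeg i _ => i == j
  | _, _ => false
  end.

Definition eqcase (h1 h2 : hlit) : option (seq nat * seq nat) :=
  match h1, h2 with
  | HPos i zs, HNeg j zs' => if i == j then Some (zs, zs') else None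
  | HNeg j zs', HPos i zs => if i == j then Some (zs, zs') else None
  | _, _ => None
  end.

Definition Kc (A : Type) (s : nat -> A) h1 h2 : Prop :=
  if valid2 h1 h2 then True else
  match eqcase h1 h2 with Some (zs, zs') => map s zs = map s zs' | None => False end.

Definition neg_ok (A : eqType) (s : nat -> A) (h : hlit) (k : nat) (t : seq A) : bool :=
  if h is HNeg i zs then (k == i) && (t == map s zs) else false.

Lemma hsem_mk (A : Type) (g : nat -> seq A -> bool) p s h : hlit_wf p h ->
  hlit_sem (mk g p 0) s h <->
  match h with
  | HPos i zs => g i (map s zs)
  | HNeg i zs => ~~ g i (map s zs)
  | HEx i => exists t : seq A, size t = (nth (true, 0) p i).2 /\ g i t
  | HBot => False
  end.
Proof.
case: h => [i zs|i zs|i|] //=.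
- move=> [Hi Hz]; rewrite nth_mk //= add0n; split.
    by move=> [t [-> H]].
  move=> H; have ht : size (map s zs) == (nth (true, 0) p i).2 by rewrite size_map Hz.
  by exists (Tuple ht).
- move=> [Hi Hz]; rewrite nth_mk //= add0n; split.
    by move=> [t [-> H]].
  move=> H; have ht : size (map s zs) == (nth (true, 0) p i).2 by rewrite size_map Hz.
  by exists (Tuple ht).
- move=> Hi; rewrite nth_mk //= add0n; split.
    by move=> [t H]; exists (val t); rewrite size_tuple.
  move=> [t [Ht H]]; have ht : size t == (nth (true, 0) p i).2 by rewrite Ht.
  by exists (Tuple ht).
Qed.

Definition G (A : eqType) (s : nat -> A) h1 h2 k t := neg_ok s h1 k t || neg_ok s h2 k t.

Definition hg (A : Type) (g : nat -> seq A -> bool) p s h : Prop :=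
  match h with
  | HPos i zs => g i (map s zs)
  | HNeg i zs => ~~ g i (map s zs)
  | HEx i => exists t : seq A, size t = (nth (true, 0) p i).2 /\ g i t
  | HBot => False
  end.

Lemma falsify (A : eqType) (s : nat -> A) p h1 h2 : ~ Kc s h1 h2 ->
  ~ hg (G s h1 h2) p s h1 /\ ~ hg (G s h1 h2) p s h2.
Proof.
rewrite /Kc /G.
case: h1 h2 => [i zs|i zs|i|] [j zs'|j zs'|j|] //=; rewrite ?eqxx ?orbT ?orbF //=.
all: try (by move=> _; split=> // [[t []]]).
- case: (i =P j) => [_|] /= NE; split=> //; by move/eqP.
- case: (j =P i) => [_|] /= NE; split=> //; move/eqP => E; apply: NE; by rewrite E.

- case: (i =P j) => // NE _; split=> // [[t [_]]]; by case: (j =P i) => // E; rewrite E in NE.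
- case: (j =P i) => // NE _; split=> // [[t [_]]]; by case: (i =P j) => // E; rewrite E in NE.
- by move=> _; split; move=> [t []].
Qed.

Lemma key (A : finType) p s h1 h2 : hlit_wf p h1 -> hlit_wf p h2 ->
  (forall env : seq (Rel A), shaped p env -> hlit_sem env s h1 \/ hlit_sem env s h2)
  <-> Kc s h1 h2.
Proof.
move=> W1 W2; split; last first.
- rewrite /Kc; case V2: (valid2 h1 h2).
  + move=> _ env Hs.
    case: h1 h2 W1 W2 V2 => [i zs|i zs|i|] [j zs'|j zs'|j|] //= W1 W2 /eqP E; subst j.
    * case: W1 => Hi Hz; have := shaped_nth Hs Hi.
      case: (nth (rel0 A) env i) => r R /= Er.
      have ht : size (map s zs) == r by rewrite size_map Hz Er.
      case: (boolP (R (Tuple ht))) => HR; [right; by exists (Tuple ht)|left; by exists (Tuple ht)].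
    * case: W2 => Hi Hz; have := shaped_nth Hs Hi.
      case: (nth (rel0 A) env i) => r R /= Er.
      have ht : size (map s zs') == r by rewrite size_map Hz Er.
      case: (boolP (R (Tuple ht))) => HR; [left; by exists (Tuple ht)|right; by exists (Tuple ht)].
  + case: h1 h2 W1 W2 V2 => [i zs|i zs|i|] [j zs'|j zs'|j|] //= W1 W2 _; case: eqP => // E; subst j => Em env Hs.
    * case: W1 W2 => Hi Hz [_ Hz']; have := shaped_nth Hs Hi.
      case: (nth (rel0 A) env i) => r R /= Er.
      have ht : size (map s zs) == r by rewrite size_map Hz Er.
      case: (boolP (R (Tuple ht))) => HR; [left; by exists (Tuple ht)|right; exists (Tuple ht); split=> //; by rewrite /= -Em].
    * case: W1 W2 => Hi Hz [_ Hz']; have := shaped_nth Hs Hi.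
      case: (nth (rel0 A) env i) => r R /= Er.
      have ht : size (map s zs') == r by rewrite size_map Hz' Er.
      case: (boolP (R (Tuple ht))) => HR; [right; exists (Tuple ht); split=> //; by rewrite /= Em|left; by exists (Tuple ht)].
- move=> H; apply: NNPP => NK.
  case: (H (mk (G s h1 h2) p 0) (shaped_mk _ p 0)); rewrite hsem_mk //;
    by case: (falsify p NK).
Qed.


Definition trans (V : vocab) (c : clause V) : seq (seq (tlit V)) :=
  let: (b, h1, h2) := c in
  if valid2 h1 h2 then [::] else
  match eqcase h1 h2 with
  | Some (zs, zs') => [seq b ++ [:: TEq V q.1 q.2] | q <- zip zs zs']
  | None => [:: b]
  end.

Lemma eqcase_size p h1 h2 zs zs' : hlit_wf p h1 -> hlit_wf p h2 ->
  eqcase h1 h2 = Some (zs, zs') -> size zs = size zs'.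
Proof.
case: h1 h2 => [i a|i a|i|] [j b|j b|j|] //= [_ Ha] [_ Hb];
  case: eqP => // E [<- <-]; subst; congruence.
Qed.

Lemma map_zip (A : Type) (s : nat -> A) zs zs' : size zs = size zs' ->
  (map s zs = map s zs' <-> forall q, List.In q (zip zs zs') -> s q.1 = s q.2).
Proof.
elim: zs zs' => [|x zs IH] [|y zs'] //=.
move=> [Hs]; split.
- case=> Exy /(IH _ Hs) H q [<-|] //; exact: H.
- move=> H; rewrite (H (x, y)) /=; last by left.
  by rewrite (proj2 (IH _ Hs)) // => q Hq; apply: H; right.
Qed.

Lemma zip_cnf (V : vocab) (A : Type) (I : interp V A) s (b : seq (tlit V)) (l : seq (nat * nat)) :
  (forall C, List.In C [seq b ++ [:: TEq V q.1 q.2] | q <- l] ->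
     exists t, List.In t C /\ tlit_sem I s t) <->
  ((exists t, List.In t b /\ tlit_sem I s t) \/ forall q, List.In q l -> s q.1 = s q.2).
Proof.
elim: l => [|q l IH] /=.
  by split=> [_|_ C []]; right.
split.
- move=> H; case: (classic (exists t, List.In t b /\ tlit_sem I s t)) => HB; first by left.
  right=> q' [<-|Hq].
  + have [t [Ht Hs]] := H (b ++ [:: TEq V q.1 q.2]) (or_introl erefl).
    case: (List.in_app_or _ _ _ Ht) => [Ht'|[Et|[]]]; first by case: HB; exists t; split.
    by rewrite -Et in Hs.
  + have H2 : forall C, List.In C [seq b ++ [:: TEq V q.1 q.2] | q <- l] ->
        exists t, List.In t C /\ tlit_sem I s t by move=> C HC; apply: H; right.
    by case: (proj1 IH H2) => // H'; apply: H'.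
- case=> [[t [Ht Hs]]|H] C.
  + case=> [<-|HC]; first by exists t; split=> //; apply: List.in_or_app; left.
    by apply: (proj2 IH) => //; left; exists t.
  + case=> [<-|HC]; first by exists (TEq V q.1 q.2); split; [apply: List.in_or_app; right; left|apply: H; left].
    by apply: (proj2 IH) => //; right => q' Hq'; apply: H; right.
Qed.

Lemma clause_lem (V : vocab) (A : finType) (I : interp V A) p s (c : clause V) :
  hlit_wf p c.1.2 -> hlit_wf p c.2 ->
  (forall env, shaped p env -> clause_sem I env s c) <->
  (forall C, List.In C (trans c) -> exists t, List.In t C /\ tlit_sem I s t).
Proof.
case: c => [[b h1] h2] /= W1 W2.
set B := exists t, List.In t b /\ tlit_sem I s t.
have -> : (forall env, shaped p env -> clause_sem I env s (b, h1, h2)) <-> B \/ Kc s h1 h2.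
  rewrite -(key s W1 W2) /clause_sem /=; split.
  - move=> H; case: (classic B) => HB; [by left|right] => env Hs.
    by case: (H env Hs).
  - by case=> [HB|H] env Hs; [left|right; apply: H].
rewrite /Kc; case: (valid2 h1 h2).
  by split=> _; [move=> C []|right].
case E: (eqcase h1 h2) => [[zs zs']|].
  by rewrite zip_cnf (map_zip _ (eqcase_size W1 W2 E)).
split.
- case=> // HB C [<-|[]] //.
- by move=> H; left; apply: H; left.
Qed.

Theorem proposition2p1 (V : vocab) (F : sokrom V) :
  sokrom_wf F -> is_Pi11 F ->
  exists phi : cnf V,
    forall (A : finType) (I : interp V A), 0 < #|A| ->
      (sokrom_sat I F <-> cnf_sat I phi).
Proof.
move=> Hwf [_ Hall]; exists (List.flat_map (@trans V) (clauses F)) => A I _.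
rewrite /sokrom_sat prefix_all //; split.
- move=> H s C /List.in_flat_map [c [Hc HC]].
  have [W1 W2] := Hwf c Hc.
  by apply: (proj1 (clause_lem I s W1 W2)) HC => env Hs; apply: H.
- move=> H env Hs s c Hc.
  have [W1 W2] := Hwf c Hc.
  apply: (proj2 (clause_lem I s W1 W2)) Hs => C HC.
  by apply: H; apply/List.in_flat_map; exists c.
Qed.
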